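(* Let $p$ be a prime and $R=\mathbb{F}_p[x,x^{-1}]$. For any integers $n>0$, $b>0$ and $0<r\le nb$ there is an additive subgroup $U\subset R^n$ such that $e(U)=b$ and ${\rm rk}_b(U)=r$.
   Context: For an additive subgroup $U$ of an $R$-module, $e(U)$ is the minimal positive integer $e$ with $x^eU=U$ (and $+\infty$ if none). If $x^bU=U$, ${\rm rk}_b(U)$ is the rank of $U$ regarded as an $R$-module via $x\ast u=x^bu$, where the rank of a finitely generated $R$-module is the maximal number of elements freely generating a free submodule ($0$ if none). *)

(* Defs.v *)
From mathcomp Require Import all_boot all_order all_algebra.
Set Implicit Arguments. Unset Strict Implicit. Unset Printing Implicit Defensive.
Import Order.TTheory GRing.Theory Num.Theory.
Local Open Scope ring_scope.

(* Laurent polynomials over F, R = F[x,x^-1], are represented by their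
   coefficient functions int -> F with finite support: f = sum_m f(m) x^m. *)
Definition laurent_fs (F : nzRingType) (f : int -> F) : Prop :=
  exists N : nat, forall m : int, N%:Z < `|m| -> f m = 0.

(* Ambient functions for R^n (coefficient functions of n Laurent polynomials). *)
Definition vec (F : nzRingType) (n : nat) := 'I_n -> int -> F.

Definition in_Rn (F : nzRingType) (n : nat) (v : vec F n) : Prop :=
  forall i, laurent_fs (v i).

(* multiplication by x^e on R^n : coefficient of x^m in x^e f is f(m-e) *)
Definition xpow_act (F : nzRingType) (n : nat) (e : int) (v : vec F n) : vec F n :=
  fun i m => v i (m - e).

Definition additive_subgroup (F : nzRingType) (n : nat) (U : vec F n -> Prop) : Prop :=
  [/\ (forall v, U v -> in_Rn v),
      U (fun _ _ => 0),
      (forall u v, U u -> U v -> U (fun i m => u i m + v i m)) &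
      (forall u, U u -> U (fun i m => - u i m))].

Definition xpow_stable (F : nzRingType) (n : nat) (e : int) (U : vec F n -> Prop) : Prop :=
  (forall v, U v -> U (xpow_act e v)) /\
  (forall v, U v -> exists w, U w /\ v = xpow_act e w).

Definition e_equals (F : nzRingType) (n : nat) (U : vec F n -> Prop) (b : nat) : Prop :=
  [/\ (0 < b)%N, xpow_stable b%:Z U &
      forall e : nat, (0 < e)%N -> (e < b)%N -> ~ xpow_stable e%:Z U].

(* Action of a Laurent polynomial c (supported in [-N,N]) on u in the twisted
   R-module structure x * u = x^b u, i.e. c * u = sum_j c(j) x^(b j) u. *)
Definition twisted_act (F : nzRingType) (n b N : nat) (c : int -> F) (u : vec F n)
  : vec F n :=
  fun i m => \sum_(t < (N.*2).+1)
               c (t%:Z - N%:Z) * u i (m - b%:Z * (t%:Z - N%:Z)).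

Definition free_family_b (F : nzRingType) (n b s : nat) (u : 'I_s -> vec F n) : Prop :=
  forall (N : nat) (c : 'I_s -> int -> F),
    (forall k (j : int), N%:Z < `|j| -> c k j = 0) ->
    (forall i m, \sum_(k < s) twisted_act b N (c k) (u k) i m = 0) ->
    forall k j, c k j = 0.

Definition rank_b (F : nzRingType) (n : nat) (U : vec F n -> Prop) (b r : nat) : Prop :=
  (exists u : 'I_r -> vec F n, (forall k, U (u k)) /\ free_family_b b u) /\
  (forall s (u : 'I_s -> vec F n), (forall k, U (u k)) -> free_family_b b u -> (s <= r)%N).

(* Main.v *)
Require Import Defs.
From mathcomp Require Import all_boot all_order all_algebra.
From mathcomp Require Import zify.
From Stdlib Require Import Classical FunctionalExtensionality.
Set Implicit Arguments. Unset Strict Implicit. Unset Printing Implicit Defensive.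
Import Order.TTheory GRing.Theory Num.Theory.
Local Open Scope ring_scope.

Lemma teleA (F : nzRingType) (g : int -> F) (j0 : int) : laurent_fs g ->
  (forall k, j0 < k -> g k = g (k-1)) -> forall j, j0 <= j -> g j = 0.
Proof.
move=> [N HN] H j Hj.
have E: forall t : nat, g j = g (j + t%:Z).
  elim=> [|t IH]; first by rewrite addr0.
  rewrite IH (H (j + t.+1%:Z)); last by lia.
  congr g; lia.
rewrite (E (N + `|j|%N).+1); apply: HN; lia.
Qed.

Lemma tele0 (F : nzRingType) (g : int -> F) : laurent_fs g ->
  (forall k, k != 0 -> g k = g (k-1)) -> g 0 = 0 /\ g (-1) = 0.
Proof.
move=> Hg H; split.
  apply: (teleA Hg (j0 := 0)) => // k Hk; apply: H; lia.
have Hg' : laurent_fs (fun k => g (- k)).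
  case: Hg => N HN; exists N => m Hm; apply: HN; lia.
have := teleA Hg' (j0 := 1) _ (lexx 1); apply => k Hk.
rewrite (H (- (k - 1))); last by lia.
congr g; lia.
Qed.

Lemma teleall (F : nzRingType) (g : int -> F) : laurent_fs g ->
  (forall k, g k = g (k-1)) -> forall j, g j = 0.
Proof. move=> Hg H j; exact: (teleA Hg (j0 := j)). Qed.

Lemma mulb_neq (e b : nat) (k : int) : (0 < e)%N -> (e < b)%N -> b%:Z * k <> - e%:Z.
Proof. move=> H1 H2 E; have [H|H] : 0 <= k \/ k <= -1 by lia. nia. nia. Qed.
Definition slot (n b r : nat) (i : 'I_n) (m : int) : Prop :=
  exists (k : 'I_r) (q : int), val i = (k %% n)%N /\ m = (k %/ n)%N%:Z + b%:Z * q.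

Definition Uc (F : nzRingType) (n b r : nat) (v : vec F n) : Prop :=
  [/\ in_Rn v, (forall i m, ~ slot b r i m -> v i m = 0) &
   (forall i0 : 'I_n, val i0 = 0%N -> exists g, laurent_fs g /\
        forall k : int, v i0 (b%:Z * k) = g k - g (k - 1))].

Lemma lfs0 (F : nzRingType) : laurent_fs (fun _ : int => (0:F)).
Proof. by exists 0%N. Qed.

Lemma lfsD (F : nzRingType) (f g : int -> F) : laurent_fs f -> laurent_fs g ->
  laurent_fs (fun m => f m + g m).
Proof.
move=> [N1 H1] [N2 H2]; exists (maxn N1 N2) => m Hm.
rewrite H1 ?H2 ?addr0 //; lia.
Qed.

Lemma lfsN (F : nzRingType) (f : int -> F) : laurent_fs f -> laurent_fs (fun m => - f m).
Proof. move=> [N H]; exists N => m Hm; by rewrite H ?oppr0. Qed.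

Lemma lfs_shift (F : nzRingType) (f : int -> F) (e : int) : laurent_fs f ->
  laurent_fs (fun m => f (m - e)).
Proof. move=> [N H]; exists (N + `|e|%N)%N => m Hm; apply: H; lia. Qed.

Lemma U_sub (F : nzRingType) (n b r : nat) : additive_subgroup (@Uc F n b r).
Proof.
split.
- by move=> v [].
- split.
  + move=> i; exact: lfs0.
  + by [].
  + move=> i0 _; exists (fun _ => 0); split; [exact: lfs0| by move=> k; rewrite subr0].
- move=> u v [Hu1 Hu2 Hu3] [Hv1 Hv2 Hv3]; split.
  + move=> i; exact: lfsD.
  + by move=> i m Hs; rewrite Hu2 // Hv2 // addr0.
  + move=> i0 Hi0; case: (Hu3 i0 Hi0) => g [Hg Eg]; case: (Hv3 i0 Hi0) => h [Hh Eh].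
    exists (fun k => g k + h k); split; first exact: lfsD.
    by move=> k; rewrite Eg Eh; rewrite addrACA opprD.
- move=> u [Hu1 Hu2 Hu3]; split.
  + move=> i; exact: lfsN.
  + by move=> i m Hs; rewrite Hu2 // oppr0.
  + move=> i0 Hi0; case: (Hu3 i0 Hi0) => g [Hg Eg].
    exists (fun k => - g k); split; first exact: lfsN.
    by move=> k; rewrite Eg opprD.
Qed.

Lemma U_shift (F : nzRingType) (n b r : nat) (d : int) (v : vec F n) :
  Uc b r v -> Uc b r (xpow_act (b%:Z * d) v).
Proof.
move=> [H1 H2 H3]; split.
- move=> i; exact: lfs_shift.
- move=> i m Hs; rewrite /xpow_act H2 //; move=> [k [q [E1 E2]]]; apply: Hs.
  exists k, (q + d); split => //; rewrite mulrDr addrA -E2 subrK //.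
- move=> i0 Hi0; case: (H3 i0 Hi0) => g [Hg Eg].
  exists (fun k => g (k - d)); split; first exact: lfs_shift.
  move=> k; rewrite /xpow_act -mulrBr Eg; congr (_ - g _); lia.
Qed.

Lemma U_e (F : nzRingType) (n b r : nat) : (0 < n)%N -> (0 < b)%N -> (0 < r)%N ->
  (r <= n * b)%N -> e_equals (@Uc F n b r) b.
Proof.
move=> hn hb hr hrnb; split => //.
  split.
    by move=> v Hv; have := U_shift 1 Hv; rewrite mulr1.
  move=> v Hv; exists (xpow_act (b%:Z * -1) v); split; first exact: U_shift.
  apply: functional_extensionality => i; apply: functional_extensionality => m.
  rewrite /xpow_act; congr (v i _); lia.
move=> e he heb [Hs1 Hs2].
pose i0 : 'I_n := Ordinal hn.
have Hi0 : val i0 = 0%N by [].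
case: (boolP ((b - e) * n < r)%N) => Ha.
- pose v : vec F n := fun i m => if (val i == 0%N) && (m == - e%:Z) then 1 else 0.
  have Hv : Uc b r v.
    split.
    + move=> i; exists e => m Hm; rewrite /v.
      case: eqP => //= _; case: eqP => //= Em; lia.
    + move=> i m Hs; rewrite /v; case: eqP => //= Ei; case: eqP => //= Em.
      exfalso; apply: Hs; exists (Ordinal Ha), (-1); split => /=.
        by rewrite Ei modnMl.
      rewrite mulnK // Em; lia.
    + move=> j0 Hj0; exists (fun _ => 0); split; first exact: lfs0.
      move=> k; rewrite /v subr0; case: (b%:Z * k =P - e%:Z) => [Em|Em]; [exfalso; exact: mulb_neq Em | by rewrite andbF].
  have [_ _ H3] := Hs1 v Hv.
  have [g [Hg Eg]] := H3 i0 Hi0.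
  have Eg' : forall k : int, g k - g (k-1) = if k == 0 then 1 else 0.
    move=> k; rewrite -Eg /xpow_act /v Hi0 /=.
    case: (eqVneq k 0) => [->|k0]; first by rewrite mulr0 add0r eqxx.
    case: eqP => //; lia.
  have [G0 G1] : g 0 = 0 /\ g (-1) = 0.
    apply: tele0 => // k k0; apply/eqP; rewrite -subr_eq0 Eg' (negPf k0) //.
  have := Eg' 0; rewrite eqxx G0 (_ : (0:int) - 1 = -1) // G1 subrr => /eqP.
  by rewrite eq_sym oner_eq0.
- pose v : vec F n := fun i m => if val i == 0%N then
      (if m == 0 then 1 else if m == b%:Z then -1 else 0) else 0.
  have Hv : Uc b r v.
    split.
    + move=> i; exists b => m Hm; rewrite /v.
      case: eqP => //= _; case: eqP => Em; first lia; case: eqP => //= Em'; lia.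
    + move=> i m Hs; rewrite /v; case: eqP => //= Ei.
      case: eqP => Em.
        exfalso; apply: Hs; exists (Ordinal hr), 0; split => /=.
          by rewrite Ei mod0n.
        by rewrite div0n Em mulr0.
      case: eqP => //= Em'.
      exfalso; apply: Hs; exists (Ordinal hr), 1; split => /=.
        by rewrite Ei mod0n.
      by rewrite div0n Em' mulr1.
    + move=> j0 Hj0; exists (fun k => if k == 0 then 1 else 0); split.
        exists 0%N => m Hm; case: eqP => // Em; lia.
      move=> k; rewrite /v Hj0 /=.
      case: (eqVneq k 0) => [->|k0].
        by rewrite mulr0 eqxx; case: eqP => // _; rewrite subr0.
      case: (eqVneq k 1) => [->|k1].
        rewrite mulr1 subrr eqxx /=; case: eqP => //; first lia.
        by rewrite sub0r.
      case: eqP => [|_]; first nia.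
      case: eqP => [|_]; first nia.
      case: eqP => [|_]; first nia.
      by rewrite subr0.
  have [w [Hw Ew]] := Hs2 v Hv.
  have Wnz : w i0 (b%:Z - e%:Z) <> 0.
    have : v i0 b%:Z = xpow_act e w i0 b%:Z by rewrite -Ew.
    rewrite /xpow_act /v Hi0 /=; case: eqP => [|_]; first lia.
    rewrite eqxx => <- /eqP; by rewrite oppr_eq0 oner_eq0.
  have [_ Hw2 _] := Hw.
  have Hsl : slot b r i0 (b%:Z - e%:Z).
    apply: NNPP => Hns; exact: Wnz (Hw2 _ _ Hns).
  case: Hsl => k [q [Ek Eq]].
  have kr := ltn_ord k.
  have kb : (k %/ n < b)%N by rewrite ltn_divLR // mulnC; apply: leq_trans hrnb.
  have Ed := divn_eq k n.
  rewrite -Ek /= addn0 in Ed.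
  move: Ha; rewrite -leqNgt => Ha.
  have Eq0 : q = 0 by nia.
  rewrite Eq0 mulr0 addr0 in Eq.
  have : (k %/ n = b - e)%N by lia.
  move=> E2; rewrite E2 in Ed; lia.
Qed.

Lemma res_eq (a a' b : nat) (x y : int) : (a < b)%N -> (a' < b)%N ->
  a%:Z + b%:Z * x = a'%:Z + b%:Z * y -> a = a' /\ x = y.
Proof.
move=> ha ha' E.
have [H|[H|H]] : x - y >= 1 \/ x - y <= -1 \/ x = y by lia.
- exfalso; have : b%:Z * (x - y) >= b%:Z by nia. lia.
- exfalso; have : b%:Z * (x - y) <= - b%:Z by nia. lia.
- subst y; split => //; lia.
Qed.

Definition gen (F : nzRingType) (n b r : nat) (k : 'I_r) : vec F n :=
  fun i m => if val i == (k %% n)%N then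
     ((m == (k %/ n)%N%:Z)%:R - ((val k == 0%N) && (m == (k %/ n)%N%:Z + b%:Z))%:R)
   else 0.

Lemma gen_U (F : nzRingType) (n b r : nat) (k : 'I_r) : (0 < n)%N -> (0 < b)%N ->
  (r <= n * b)%N -> Uc b r (@gen F n b r k).
Proof.
move=> hn hb hrnb.
have kb : (k %/ n < b)%N by rewrite ltn_divLR // mulnC; apply: leq_trans hrnb.
split.
- move=> i; exists (k %/ n + b)%N => m Hm; rewrite /gen.
  move: (k %/ n)%N kb Hm => d kb Hm.
  case: eqP => // _; case: eqP => [|_]; first lia.
  by rewrite andbC; case: eqP => [|_]; [lia | rewrite subrr].
- move=> i m Hs; rewrite /gen; case: eqP => // Ei.
  case: (m =P (k %/ n)%N%:Z) => [Em|_].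
    exfalso; apply: Hs; exists k, 0; split => //; by rewrite mulr0 addr0.
  case: (m =P (k %/ n)%N%:Z + b%:Z) => [Em|_]; last by rewrite andbF subrr.
  exfalso; apply: Hs; exists k, 1; split => //; by rewrite mulr1.
- move=> j0 Hj0; exists (fun j : int => ((val k == 0%N) && (j == 0))%:R); split.
    exists 0%N => m Hm; case: (m =P 0) => [Em|_]; [lia | by rewrite andbF].
  move=> j; rewrite /gen Hj0.
  case: (eqVneq (val k) 0%N) => [k0|k0] /=.
    have k0' : (k : nat) = 0%N := k0.
    rewrite k0' mod0n div0n eqxx add0r.
    case: (eqVneq j 0) => [->|j0'].
      rewrite mulr0 eqxx sub0r; case: (0 =P b%:Z) => [|_]; [lia|].
      by rewrite (_ : (-1 == 0) = false).
    case: (eqVneq j 1) => [->|j1].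
      rewrite mulr1 subrr eqxx; case: (b%:Z =P 0) => [|_]; first lia. by rewrite sub0r.
    case: (b%:Z * j =P 0) => [|_]; first nia. case: (b%:Z * j =P b%:Z) => [|_]; first nia.
    case: (j - 1 =P 0) => [|_]; first lia. by rewrite subrr.
  rewrite subrr; case: eqP => // Hm.
  have kpos : (0 < k %/ n)%N.
    have := divn_eq k n; rewrite -Hm addn0 => E.
    rewrite lt0n; apply/eqP => E2; rewrite E2 mul0n in E; move/eqP: k0; apply; exact: E.
  case: eqP => [E|_]; first by exfalso; apply: (@mulb_neq (k %/ n)%N b (- j)) => //; lia.
  by rewrite subrr.
Qed.

Lemma delta_sum (F : nzRingType) (c : int -> F) (N : nat) (j : int) :
  (forall j, N%:Z < `|j| -> c j = 0) ->
  \sum_(t < (N.*2).+1) c (t%:Z - N%:Z) * ((t%:Z - N%:Z) == j)%:R = c j.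
Proof.
move=> HN.
case: (boolP (`|j| <= N%:Z)) => Hj.
  have ht : ((absz (j + N%:Z)%R) < (N.*2).+1)%N by lia.
  rewrite (bigD1 (Ordinal ht)) //= big1 ?addr0.
    have E : (Posz (absz (j + N%:Z)%R) - N%:Z = j) by lia.
    by rewrite E eqxx mulr1.
  move=> t /eqP Ht; case: eqP => [E|_]; last by rewrite mulr0.
  exfalso; apply: Ht; apply: val_inj => /=; lia.
rewrite big1 ?HN //; first lia.
move=> t _; case: eqP => [E|_]; last by rewrite mulr0.
rewrite E HN ?mul0r //; lia.
Qed.

Lemma tw_gen (F : nzRingType) (n b r N : nat) (c : int -> F) (k k' : 'I_r) (i : 'I_n) (j : int) :
  (0 < n)%N -> (0 < b)%N -> (r <= n * b)%N ->
  (forall j, N%:Z < `|j| -> c j = 0) -> val i = (k' %% n)%N ->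
  twisted_act b N c (@gen F n b r k) i ((k' %/ n)%N%:Z + b%:Z * j) =
  if k == k' then c j - (val k == 0%N)%:R * c (j - 1) else 0.
Proof.
move=> hn hb hrnb HN; case: (eqVneq k k') => [<-|kk'] Hi; rewrite /twisted_act /gen.
  have Hb : (\val i == (k %% n)%N) = true by apply/eqP.
  rewrite Hb.
  move: (k %/ n)%N => d.
  rewrite (eq_bigr (fun t : 'I_(N.*2).+1 => c (t%:Z - N%:Z) * (t%:Z - N%:Z == j)%:R -
     (val k == 0%N)%:R * (c (t%:Z - N%:Z) * (t%:Z - N%:Z == j - 1)%:R))); last first.
    move=> t _.
    have E1 : (d%:Z + b%:Z * j - b%:Z * (t%:Z - N%:Z) == d%:Z) = (t%:Z - N%:Z == j).
      by apply/eqP/eqP => H; nia.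
    have E2 : (d%:Z + b%:Z * j - b%:Z * (t%:Z - N%:Z) == d%:Z + b%:Z) = (t%:Z - N%:Z == j - 1).
      by apply/eqP/eqP => H; nia.
    rewrite E1 E2 mulrBr.
    have -> : ((val k == 0%N) && (t%:Z - N%:Z == j - 1))%:R =
       (val k == 0%N)%:R * (t%:Z - N%:Z == j - 1)%:R :> F.
      by case: (val k == 0%N); rewrite ?mul1r ?mul0r.
    by case: (val k == 0%N); rewrite ?mul1r ?mul0r ?mulr0.
  by rewrite sumrB -mulr_sumr !delta_sum.
have kb : forall kk : 'I_r, (kk %/ n < b)%N.
  by move=> kk; rewrite ltn_divLR // mulnC; apply: leq_trans (ltn_ord kk) hrnb.
have Ek := divn_eq k n; have Ek' := divn_eq k' n.
have kb1 := kb k; have kb2 := kb k'.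
apply: big1 => t _; case: eqP => Hik; last by rewrite mulr0.
have dd : (k %/ n)%N <> (k' %/ n)%N.
  move=> E; move/eqP: kk'; apply; apply: val_inj => /=; rewrite Ek Ek' E -Hik Hi //.
move: (k %/ n)%N (k' %/ n)%N dd kb1 kb2 => d d' dd kb1 kb2.
case: (d'%:Z + b%:Z * j - b%:Z * (t%:Z - N%:Z) =P d%:Z) => [E|_].
  exfalso; apply: dd; symmetry.
  have E' : d'%:Z + b%:Z * (j - (t%:Z - N%:Z)) = d%:Z + b%:Z * 0 by nia.
  by case: (res_eq kb2 kb1 E').
case: (d'%:Z + b%:Z * j - b%:Z * (t%:Z - N%:Z) =P d%:Z + b%:Z) => [E|_]; last by rewrite andbF subrr mulr0.
exfalso; apply: dd; symmetry.
have E' : d'%:Z + b%:Z * (j - (t%:Z - N%:Z)) = d%:Z + b%:Z * 1 by nia.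
by case: (res_eq kb2 kb1 E').
Qed.

Lemma gen_free (F : nzRingType) (n b r : nat) : (0 < n)%N -> (0 < b)%N -> (r <= n * b)%N ->
  free_family_b b (@gen F n b r).
Proof.
move=> hn hb hrnb N c Hc Hsum k j.
pose ik : 'I_n := Ordinal (ltn_pmod k hn).
have E : forall j', c k j' - (val k == 0%N)%:R * c k (j' - 1) = 0.
  move=> j'; have := Hsum ik ((k %/ n)%N%:Z + b%:Z * j').
  rewrite (bigD1 k) //= (@tw_gen F n b r N (c k) k k ik j' hn hb hrnb (Hc k) erefl) eqxx big1 ?addr0 //.
  move=> k' /negPf nk; by rewrite (@tw_gen F n b r N (c k') k' k ik j' hn hb hrnb (Hc k') erefl) nk.
case: (eqVneq (val k) 0%N) => [k0|k0].
  have Hl : laurent_fs (c k) by exists N; apply: Hc.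
  have H : forall jj, c k jj = c k (jj - 1).
    move=> jj; apply/eqP; rewrite -subr_eq0; apply/eqP.
    by have := E jj; rewrite k0 eqxx mul1r.
  exact: (teleall Hl H j).
by have := E j; rewrite (negPf k0) mul0r subr0.
Qed.

Lemma sum_nz (F : nzRingType) (n : nat) (f : 'I_n -> F) :
  \sum_(i < n) f i <> 0 -> exists i, f i <> 0.
Proof.
move=> H; apply: NNPP => H'; apply: H; apply: big1 => i _.
by apply: NNPP => Hi; apply: H'; exists i.
Qed.

Lemma tw_lin (F : nzRingType) (n b N : nat) (c1 c2 : int -> F) (u : vec F n) i m :
  twisted_act b N (fun j => c1 j - c2 j) u i m =
  twisted_act b N c1 u i m - twisted_act b N c2 u i m.
Proof. rewrite /twisted_act -sumrB; apply: eq_bigr => t _; exact: mulrBl. Qed.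

Lemma unif_bound (F : nzRingType) (n s : nat) (u : 'I_s -> vec F n) :
  (forall k, in_Rn (u k)) ->
  exists M : nat, forall k i m, M%:Z < `|m| -> u k i m = 0.
Proof.
move=> H.
have [f Hf] := @fin_all_exists ('I_s * 'I_n)%type (fun _ => nat)
  (fun x N => forall m, N%:Z < `|m| -> u x.1 x.2 m = 0) (fun x => H x.1 x.2).
exists (\max_x f x) => k i m Hm; apply: (Hf (k, i)) => /=.
have := @leq_bigmax _ f (k, i); lia.
Qed.

Lemma rank_ub (p : nat) (hp : prime p) (n b r s : nat) (u : 'I_s -> vec 'F_p n) :
  (0 < n)%N -> (0 < b)%N -> (r <= n * b)%N -> (forall k, Uc b r (u k)) ->
  free_family_b b u -> (s <= r)%N.
Proof.
move=> hn hb hrnb HU Hfree.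
have Hin : forall k, in_Rn (u k) by move=> k; case: (HU k).
have [M HM] := unif_bound Hin.
rewrite leqNgt; apply/negP => Hrs.
pose N := (r * (2 * M + 2))%N.
pose Q := (M + N + 1)%N.
pose L := (2 * Q + 1)%N.
pose ch (h : {ffun 'I_s * 'I_(N.*2).+1 -> 'F_p}) (k : 'I_s) (j : int) : 'F_p :=
  if (- N%:Z <= j) && (j <= N%:Z) then h (k, inord (absz (j + N%:Z))) else 0.
pose Phi h : vec 'F_p n := fun i m => \sum_(k < s) twisted_act b N (ch h k) (u k) i m.
pose ik (k : 'I_r) : 'I_n := Ordinal (ltn_pmod k hn).
pose psi (v : vec 'F_p n) : {ffun 'I_r * 'I_L -> 'F_p} :=
  [ffun x : 'I_r * 'I_L => v (ik x.1) ((x.1 %/ n)%N%:Z + b%:Z * ((x.2 : nat)%:Z - Q%:Z))].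
have chsupp : forall h k j, N%:Z < `|j| -> ch h k j = 0.
  move=> h k j Hj; rewrite /ch; case: ifP => // /andP [H1 H2]; lia.
have supp : forall h i m, Phi h i m <> 0 -> exists x : 'I_r * 'I_L,
    i = ik x.1 /\ m = (x.1 %/ n)%N%:Z + b%:Z * ((x.2 : nat)%:Z - Q%:Z).
  move=> h i m /sum_nz [k /sum_nz [t Ht]].
  have Hu : u k i (m - b%:Z * (t%:Z - N%:Z)) <> 0 by move=> E; apply: Ht; rewrite E mulr0.
  have [_ Hs _] := HU k.
  have Hsl : slot b r i (m - b%:Z * (t%:Z - N%:Z)).
    by apply: NNPP => Hn; exact: Hu (Hs _ _ Hn).
  have Hmb : `|m - b%:Z * (t%:Z - N%:Z)| <= M%:Z.
    by rewrite leNgt; apply/negP => Hc; exact: Hu (HM _ _ _ Hc).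
  case: Hsl => k' [q0 [Ei Em]].
  have kb : (k' %/ n < b)%N by rewrite ltn_divLR // mulnC; apply: leq_trans (ltn_ord k') hrnb.
  have ht := ltn_ord t.
  have Hq : (absz (q0 + (t%:Z - N%:Z) + Q%:Z)%R < L)%N.
    rewrite /L /Q; move: (k' %/ n)%N kb Em => d kb Em.
    have q0b : - (M%:Z) - 1 <= q0 <= M%:Z.
      move: Hmb; rewrite Em => Hmb.
      apply/andP; split.
        have [H|H] : q0 >= - (M%:Z) - 1 \/ q0 <= - (M%:Z) - 2 by lia.
          done.
        exfalso; have : b%:Z * q0 <= b%:Z * (- (M%:Z) - 2) by nia. nia.
      have [H|H] : q0 <= M%:Z \/ q0 >= M%:Z + 1 by lia.
        done.
      exfalso; have : b%:Z * q0 >= b%:Z * (M%:Z + 1) by nia. nia.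
    lia.
  exists (k', Ordinal Hq); split.
    by apply: val_inj; rewrite /= Ei.
  rewrite /=.
  have -> : Posz (absz (q0 + (t%:Z - N%:Z) + Q%:Z)) - Q%:Z = q0 + (t%:Z - N%:Z).
    move: (k' %/ n)%N kb Em => d kb Em.
    have q0b : - (M%:Z) - 1 <= q0.
      move: Hmb; rewrite Em => Hmb.
      have [H|H] : q0 >= - (M%:Z) - 1 \/ q0 <= - (M%:Z) - 2 by lia.
        done.
      exfalso; have : b%:Z * q0 <= b%:Z * (- (M%:Z) - 2) by nia. nia.
    rewrite /Q; lia.
  move: (k' %/ n)%N kb Em => d kb Em.
  have -> : m = (m - b%:Z * (t%:Z - N%:Z)) + b%:Z * (t%:Z - N%:Z) by rewrite subrK.
  rewrite Em; nia.
have Phi_eq : forall h1 h2, psi (Phi h1) = psi (Phi h2) -> forall i m, Phi h1 i m = Phi h2 i m.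
  move=> h1 h2 E i m.
  case: (classic (exists x : 'I_r * 'I_L,
    i = ik x.1 /\ m = (x.1 %/ n)%N%:Z + b%:Z * ((x.2 : nat)%:Z - Q%:Z))) => [[x [-> ->]]|Hn].
    by move/ffunP: E => /(_ x); rewrite !ffunE.
  have Z : forall h, Phi h i m = 0.
    by move=> h; apply: NNPP => Hnz; exact: Hn (supp h i m Hnz).
  by rewrite !Z.
have inj : injective (fun h => psi (Phi h)).
  move=> h1 h2 E; apply/ffunP => -[k t].
  have ht := ltn_ord t.
  have Ech : forall h, ch h k (t%:Z - N%:Z) = h (k, t).
    move=> h; rewrite /ch.
    have -> : (- N%:Z <= t%:Z - N%:Z) && (t%:Z - N%:Z <= N%:Z) = true.
      by apply/andP; split; lia.
    by rewrite subrK /= inord_val.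
  have := Hfree N (fun k j => ch h1 k j - ch h2 k j) _ _ k (t%:Z - N%:Z).
  rewrite /= !Ech => H.
  apply/eqP; rewrite -subr_eq0; apply/eqP; apply: H.
    by move=> k0 j0 Hj; rewrite !chsupp // subrr.
  move=> i m.
  rewrite (eq_bigr (fun k => twisted_act b N (ch h1 k) (u k) i m - twisted_act b N (ch h2 k) (u k) i m)).
    by rewrite sumrB; have := Phi_eq h1 h2 E i m; rewrite /Phi => ->; rewrite subrr.
  by move=> k0 _; rewrite tw_lin.
have := @leq_card _ _ _ inj.
rewrite !card_ffun !card_prod !card_ord leq_exp2l //.
rewrite /L /Q /N; nia.
Qed.

Theorem lemma6p19 (p : nat) (hp : prime p) (n b r : nat) :
  (0 < n)%N -> (0 < b)%N -> (0 < r)%N -> (r <= n * b)%N ->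
  exists U : vec 'F_p n -> Prop,
    [/\ additive_subgroup U, e_equals U b & rank_b U b r].
Proof.
move=> hn hb hr hrnb.
exists (@Uc 'F_p n b r); split.
- exact: U_sub.
- exact: U_e.
- split.
    exists (@gen 'F_p n b r); split.
      by move=> k; apply: gen_U.
    exact: gen_free.
  move=> s u Hu Hf; exact: (rank_ub hp hn hb hrnb Hu Hf).
Qed.
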